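(* Let $p>3$ be prime, $t\in\{1,3,p,3p\}$, and $1\le r\le 3p-1$ with $\gcd(r,3p)=1$. Then \[\Lambda(1,r,t)=\begin{cases}\emptyset & \text{if } r\equiv 1\pmod 3,\\ \{\ell\in\Delta(|r|_p): \ell\text{ odd}\} & \text{if } r\equiv 2\pmod 3.\end{cases}\]
   Context: $|r|_m$ is the multiplicative order of $r$ modulo $m$ (with $|r|_1=1$). $S_k(x):=1+x+\cdots+x^{k-1}$, $S_0:=0$. For $m\ge1$ with $\gcd(r,m)=1$, $\kappa(m,r,t):=\dfrac{m|r|_m}{\gcd(m,\,tS_{|r|_m}(r))}$. For $d\in\{1,3,p,3p\}$, $\Lambda(d,r,t):=\{\ell>0:\ \ell \text{ divides } \frac{|r|_{3p}}{\gcd(\kappa(d,r,t),|r|_{3p})}\text{ and }\gcd(r^{\ell\kappa(d,r,t)}-1,3p)=d\}$. For a positive integer $m$, $\Delta(m):=\{\ell: 0<\ell<m,\ \ell\mid m\}$ (proper positive divisors of $m$). *)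

(* Defs.v *)
From mathcomp Require Import all_boot.
Set Implicit Arguments. Unset Strict Implicit. Unset Printing Implicit Defensive.

(* |r|_m : multiplicative order of r modulo m, i.e. the least k >= 1 with
   r^k = 1 (mod m).  For gcd(r,m)=1 and m >= 1 this order is <= m, so it is
   found by searching k in 1..m.  For m = 1 this gives 1. *)
Definition ordm (m r : nat) : nat :=
  (find (fun k => r ^ k.+1 == 1 %[mod m]) (iota 0 m)).+1.

Definition Ssum (k x : nat) : nat := \sum_(i < k) x ^ i.

Definition kappa (m r t : nat) : nat :=
  (m * ordm m r) %/ gcdn m (t * Ssum (ordm m r) r).

Definition Lambda (p d r t l : nat) : bool :=
  [&& 0 < l,
      l %| ordm (3 * p) r %/ gcdn (kappa d r t) (ordm (3 * p) r)
    & gcdn (r ^ (l * kappa d r t) - 1) (3 * p) == d].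

Definition Delta (m l : nat) : bool := [&& 0 < l, l < m & l %| m].

(* Main.v *)
Require Import Defs.
From mathcomp Require Import all_boot.

Lemma ordm_spec m r e : 0 < e <= m -> r ^ e = 1 %[mod m] ->
  forall k, (r ^ k == 1 %[mod m]) = (ordm m r %| k).
Proof.
move=> /andP[e0 em] he.
set P := (fun k => r ^ k.+1 == 1 %[mod m]).
have hh : has P (iota 0 m).
  apply/hasP; exists e.-1; first by rewrite mem_iota /= add0n; case: e e0 em {he}.
  by rewrite /P prednK // he.
have hf : find P (iota 0 m) < m by rewrite -[in X in _ < X](size_iota 0 m) -has_find.
have ho : r ^ ordm m r = 1 %[mod m].
  have := nth_find 0 hh; rewrite nth_iota //= add0n.
  by move/eqP.
have hmin : forall s, 0 < s < ordm m r -> r ^ s != 1 %[mod m].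
  move=> s /andP[s0 so].
  have : s.-1 < find P (iota 0 m) by rewrite /ordm in so; case: s s0 so.
  move=> hs; have := before_find 0 hs.
  rewrite nth_iota ?add0n; last exact: (ltn_trans hs hf).
  by rewrite /P prednK // => ->.
have key : forall k, r ^ k = r ^ (k %% ordm m r) %[mod m].
  move=> k; rewrite {1}(divn_eq k (ordm m r)) expnD (mulnC (k %/ _)) expnM.
  have hq : forall q, (r ^ ordm m r) ^ q = 1 %[mod m].
    by move=> q; rewrite -modnXm ho modnXm exp1n.
  by rewrite -modnMml hq modnMml mul1n.
move=> k; rewrite key.
case: (posnP (k %% ordm m r)) => hk.
  by rewrite hk expn0 /dvdn hk eqxx.
have -> : ordm m r %| k = false by rewrite /dvdn eqn0Ngt hk.
by apply/negbTE/hmin; rewrite hk ltn_mod.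
Qed.

Lemma ordm1 r : ordm 1 r = 1.
Proof. by rewrite /ordm /= !modn1. Qed.

Lemma kappa1 r t : kappa 1 r t = 1.
Proof. by rewrite /kappa ordm1 gcd1n. Qed.

Theorem lemma5p2 (p t r : nat) :
  prime p -> 3 < p ->
  t \in [:: 1; 3; p; 3 * p] ->
  1 <= r <= 3 * p - 1 -> coprime r (3 * p) ->
  (r %% 3 = 1 -> forall l : nat, ~~ Lambda p 1 r t l) /\
  (r %% 3 = 2 -> forall l : nat, Lambda p 1 r t l = Delta (ordm p r) l && odd l).
Proof.
move=> pP p3 _ /andP[r1 _] cr.
rewrite coprimeMr in cr; case/andP: cr => cr3 crp.
have p0 : 0 < p by apply: prime_gt0.
have c3p : coprime 3 p by rewrite prime_coprime // dvdn_prime2 //; apply/eqP => e; rewrite -e in p3.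
have rl0 : forall l, 1 <= r ^ l by move=> l; rewrite expn_gt0 r1.
have ferm : r ^ (p - 1) = 1 %[mod p].
  apply/eqP; rewrite eqn_mod_dvd //.
  rewrite -(@Gauss_dvdr p r); last by rewrite coprime_sym.
  rewrite mulnBr muln1 -expnS subn1 prednK //.
  rewrite -eqn_mod_dvd; first by apply/eqP/fermat_little.
  by rewrite -{1}(expn1 r) leq_pexp2l // prime_gt0.
have r3 : r %% 3 = 1 \/ r %% 3 = 2.
  move: cr3; rewrite coprime_sym prime_coprime // /dvdn.
  have := ltn_pmod r (isT : 0 < 3); case: (r %% 3) => [|[|[|]]] //; by [left|right].
have sq3 : r ^ 2 = 1 %[mod 3].
  by rewrite -modnXm; case: r3 => ->.
have odd3 : forall l, r ^ l = r ^ (odd l) %[mod 3].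
  move=> l; rewrite -{1}(odd_double_half l) expnD -muln2 (mulnC l./2) expnM.
  have hq : (r ^ 2) ^ l./2 = 1 %[mod 3] by rewrite -modnXm sq3 modnXm exp1n.
  by rewrite -modnMmr hq muln1.
set op := ordm p r.
have specp : forall k, (r ^ k == 1 %[mod p]) = (op %| k).
  apply: ordm_spec ferm; rewrite subn_gt0 leq_subr andbT; exact: ltn_trans p3.
set O := ordm (3 * p) r.
have spec : forall k, (r ^ k == 1 %[mod 3 * p]) = (O %| k).
  apply: (@ordm_spec _ _ (2 * (p - 1))).
    rewrite muln_gt0 subn_gt0 /=; apply/andP; split; first exact: ltn_trans p3.
    apply: leq_trans (leq_mul (isT : 2 <= 3) (leq_subr 1 p)) _; by [].
  apply/eqP; rewrite chinese_remainder //; apply/andP; split; apply/eqP.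
    by rewrite expnM -modnXm sq3 modnXm exp1n.
  by rewrite mulnC expnM -modnXm ferm modnXm exp1n.
have hg : forall l, (gcdn (r ^ l - 1) (3 * p) == 1) =
   ~~ (r ^ l == 1 %[mod 3]) && ~~ (r ^ l == 1 %[mod p]).
  move=> l; rewrite -/(coprime _ _) coprimeMr !(coprime_sym (_ - _)).
  by rewrite !prime_coprime // !eqn_mod_dvd //; apply: rl0.
split.
  move=> h l; rewrite /Lambda kappa1 muln1 hg.
  by rewrite -modnXm h exp1n eqxx /= !andbF.
move=> h l; rewrite /Lambda /Delta kappa1 muln1 gcd1n divn1 hg specp.
have -> : (r ^ l == 1 %[mod 3]) = ~~ odd l.
  by rewrite odd3; case: (odd l); rewrite ?h.
rewrite negbK.
case ol : (odd l); last by rewrite !andbF.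
rewrite !andbT /=; case: (posnP l) => [->|l0] //=.
have opO : op %| O by rewrite -specp; have := spec O; rewrite dvdnn; rewrite chinese_remainder // => /andP[].
have O2 : O %| 2 * op.
  rewrite -spec chinese_remainder //; apply/andP; split.
    by rewrite odd3 oddM andFb expn0.
  by rewrite specp dvdn_mull.
have -> : (l %| O) = (l %| op).
  apply/idP/idP => hl; last exact: dvdn_trans hl opO.
  by rewrite -(@Gauss_dvdr l 2) ?coprimen2 ?ol //; apply: dvdn_trans hl O2.
case hl : (l %| op); rewrite ?andbF //=.
have op0 : 0 < op by [].
by rewrite ltn_neqAle eqn_dvd hl dvdn_leq //= !andbT.
Qed.
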